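(* Let $(\Omega,+)$ be a group and $a,b$ subgroups with $a\top b$. Identify $\Omega$ with $a\times b$ via the bijection $(\alpha,\beta)\mapsto\alpha+\beta$, so that every subset of $\Omega$ is a relation between $a$ and $b$. For $x,y,z\subseteq\Omega$ define the ternary composition of relations $z\circ y^{-1}\circ x:=\{\alpha'+\beta' : \alpha'\in a,\beta'\in b,\ \exists \alpha''\in a,\beta''\in b \text{ with } \alpha''+\beta''\in y,\ \alpha'+\beta''\in x,\ \alpha''+\beta'\in z\}$. Then $z\circ y^{-1}\circ x=\Gamma(x,a,y,b,z)$ for all $x,y,z\subseteq\Omega$. If moreover $a$ and $b$ commute (every element of $a$ commutes with every element of $b$), then the set of subgroups of $\Omega$ is stable under this ternary law.
   Context: $(\Omega,+)$ is a group written additively but not necessarily abelian. For subsets $x,y\subseteq\Omega$, $x\top y$ means every $\omega\in\Omega$ has a unique decomposition $\omega=\xi+\eta$ with $\xi\in x$, $\eta\in y$. For subsets $x,a,y,b,z$: $\Gamma(x,a,y,b,z)=\{\omega\in\Omega:\exists\alpha\in a,\beta\in b:\ \alpha+\omega+\beta\in y,\ \alpha+\omega\in z,\ \omega+\beta\in x\}$. *)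

(* Defs.v *)
(* an abstract (possibly infinite, non-abelian) group written
   additively, given by its carrier and operations; subsets are predicates. *)

Set Implicit Arguments.

Definition is_group (T : Type) (add : T -> T -> T) (zero : T) (opp : T -> T) : Prop :=
  (forall x y z, add x (add y z) = add (add x y) z) /\
  (forall x, add zero x = x) /\ (forall x, add x zero = x) /\
  (forall x, add (opp x) x = zero) /\ (forall x, add x (opp x) = zero).

Definition is_subgroup (T : Type) (add : T -> T -> T) (zero : T) (opp : T -> T)
  (s : T -> Prop) : Prop :=
  s zero /\ (forall u v, s u -> s v -> s (add u v)) /\ (forall u, s u -> s (opp u)).

Definition top (T : Type) (add : T -> T -> T) (x y : T -> Prop) : Prop :=
  forall w, exists xi eta, x xi /\ y eta /\ w = add xi eta /\
    forall xi' eta', x xi' -> y eta' -> w = add xi' eta' -> xi' = xi /\ eta' = eta.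

Definition Gamma (T : Type) (add : T -> T -> T) (x a y b z : T -> Prop) : T -> Prop :=
  fun w => exists al be, a al /\ b be /\
    y (add (add al w) be) /\ z (add al w) /\ x (add w be).

Definition tcomp (T : Type) (add : T -> T -> T) (a b x y z : T -> Prop) : T -> Prop :=
  fun w => exists al' be', a al' /\ b be' /\ w = add al' be' /\
    exists al'' be'', a al'' /\ b be'' /\
      y (add al'' be'') /\ x (add al' be'') /\ z (add al'' be').

(* Main.v *)
Require Import Defs.
From Stdlib Require Import FunctionalExtensionality PropExtensionality.

Section G.
Variables (T : Type) (add : T -> T -> T) (zero : T) (opp : T -> T).
Hypothesis A : forall x y z, add x (add y z) = add (add x y) z.
Hypothesis L0 : forall x, add zero x = x.
Hypothesis R0 : forall x, add x zero = x.
Hypothesis LI : forall x, add (opp x) x = zero.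
Hypothesis RI : forall x, add x (opp x) = zero.

Lemma cancel_l u v : add (opp u) (add u v) = v.
Proof. rewrite A, LI, L0; reflexivity. Qed.
Lemma cancel_l' u v : add u (add (opp u) v) = v.
Proof. rewrite A, RI, L0; reflexivity. Qed.
Lemma cancel_r u v : add (add v u) (opp u) = v.
Proof. rewrite <- A, RI, R0; reflexivity. Qed.

Lemma opp_add u v : opp (add u v) = add (opp v) (opp u).
Proof.
  assert (H : add (add u v) (add (opp v) (opp u)) = zero).
  { rewrite A, cancel_r, RI; reflexivity. }
  transitivity (add (opp (add u v)) (add (add u v) (add (opp v) (opp u)))).
  - rewrite H, R0; reflexivity.
  - apply cancel_l.
Qed.
End G.

Theorem theorem4p1 (T : Type) (add : T -> T -> T) (zero : T) (opp : T -> T)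
  (a b : T -> Prop) :
  is_group add zero opp ->
  is_subgroup add zero opp a -> is_subgroup add zero opp b ->
  top add a b ->
  (forall x y z : T -> Prop, tcomp add a b x y z = Gamma add x a y b z) /\
  ((forall al be, a al -> b be -> add al be = add be al) ->
   forall x y z : T -> Prop,
     is_subgroup add zero opp x -> is_subgroup add zero opp y ->
     is_subgroup add zero opp z ->
     is_subgroup add zero opp (tcomp add a b x y z)).
Proof.
  intros [A [L0 [R0 [LI RI]]]] [a0 [aD aN]] [b0 [bD bN]] Htop.
  split.
  - intros x y z. apply functional_extensionality; intro w.
    apply propositional_extensionality; split.
    + intros [al' [be' [ha' [hb' [-> [al'' [be'' [ha'' [hb'' [hy [hx hz]]]]]]]]]]].
      exists (add al'' (opp al')), (add (opp be') be'').
      repeat split; auto.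
      * replace (add (add (add al'' (opp al')) (add al' be')) (add (opp be') be''))
          with (add al'' be''); auto.
        symmetry. rewrite <- (A al''), (cancel_l _ _ _ _ A L0 LI), <- A, (cancel_l' _ _ _ _ A L0 RI); reflexivity.
      * rewrite <- (A al''), (cancel_l _ _ _ _ A L0 LI); auto.
      * rewrite <- (A al'), (cancel_l' _ _ _ _ A L0 RI); auto.
    + intros [al [be [ha [hb [hy [hz hx]]]]]].
      destruct (Htop w) as [al' [be' [ha' [hb' [-> _]]]]].
      exists al', be'; repeat split; auto.
      exists (add al al'), (add be' be); repeat split; auto.
      * replace (add (add al al') (add be' be)) with (add (add al (add al' be')) be); auto.
        rewrite !A; reflexivity.
      * rewrite A; auto.
      * rewrite A in hz; auto.
  - intros Hc x y z [x0 [xD xN]] [y0 [yD yN]] [z0 [zD zN]].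
    split; [|split].
    + exists zero, zero; repeat split; auto.
      exists zero, zero; repeat split; rewrite ?L0; auto.
    + intros u v [a1 [b1 [ha1 [hb1 [-> [a1' [b1' [ha1' [hb1' [hy1 [hx1 hz1]]]]]]]]]]]
                 [a2 [b2 [ha2 [hb2 [-> [a2' [b2' [ha2' [hb2' [hy2 [hx2 hz2]]]]]]]]]]].
      assert (sw : forall p q r s, b q -> a r ->
                add (add p q) (add r s) = add (add p r) (add q s)).
      { intros p q r s hq hr. rewrite !A. f_equal. rewrite <- !A. f_equal.
        symmetry; apply Hc; auto. }
      exists (add a1 a2), (add b1 b2); repeat split; auto.
      exists (add a1' a2'), (add b1' b2'); repeat split; auto.
      * rewrite <- sw; auto.
      * rewrite <- sw; auto.
      * rewrite <- sw; auto.
    + intros u [al [be [ha [hb [-> [al' [be' [ha' [hb' [hy [hx hz]]]]]]]]]]].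
      assert (ne : forall p q, a p -> b q ->
                opp (add p q) = add (opp p) (opp q)).
      { intros p q hp hq. rewrite (opp_add _ _ _ _ A L0 R0 LI RI).
        symmetry; apply Hc; auto. }
      exists (opp al), (opp be); repeat split; auto.
      exists (opp al'), (opp be'); repeat split; auto; rewrite <- ne; auto.
Qed.
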